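(* Let $n\ge2$, $\beta\in\partial\mathbb{D}$, $\{\alpha_j\}_{j=0}^{n-2}\in\mathbb{D}^{n-1}$, and $\rho_0=(1-|\alpha_0|^2)^{1/2}$. Let $C_n,S_n$ be built from $(\{\alpha_j\}_{j=0}^{n-2},\beta)$ and $C_{n-1},S_{n-1}$ from $(\{\alpha_{j+1}\}_{j=0}^{n-3},\beta)$, and define for $m\in\{n-1,n\}$ \[ G_m(z,w)=-i\,\frac{C_m(z)\,wS_m(w)-C_m(w)\,zS_m(z)}{z-w}. \] Then \[ G_n(z,w)=z\rho_0^2G_{n-1}(z,w)-i\rho_0^2\,zS_{n-1}(z)C_{n-1}(w). \]
   Context: For Verblunsky coefficients in $\mathbb{D}$, $\Phi_0=1$, $\Phi_{k+1}(z)=z\Phi_k(z)-\bar\alpha_k\Phi_k^*(z)$ with $\Phi_k^*(z)=z^k\overline{\Phi_k(1/\bar z)}$; $\Psi_k$ satisfies the same recursion with $\alpha_j$ replaced by $-\alpha_j$. For $m\ge1$, $P_m(z;\{\alpha_j\}_{j=0}^{m-2},\beta)=z\Phi_{m-1}(z)-\bar\beta\Phi_{m-1}^*(z)$, $Q_m(z;\{\alpha_j\}_{j=0}^{m-2},\beta)=z\Psi_{m-1}(z)+\bar\beta\Psi_{m-1}^*(z)$, $C_m=\tfrac12(P_m+Q_m)$, $S_m=\tfrac12(P_m-Q_m)$. The identity is an identity of polynomials in $z,w$. *)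

(* Defs.v *)
From mathcomp Require Import all_boot all_order all_algebra.
Set Implicit Arguments. Unset Strict Implicit. Unset Printing Implicit Defensive.
Import Order.TTheory GRing.Theory Num.Theory.
Local Open Scope ring_scope.

Section OPUC.
Variable R : numClosedFieldType.

(* reversed polynomial of formal degree k: p^*(z) = z^k conj(p(1/conj z)) *)
Definition revc (k : nat) (p : {poly R}) : {poly R} :=
  \poly_(i < k.+1) (p`_(k - i))^*.

Fixpoint Phi (a : nat -> R) (k : nat) : {poly R} :=
  match k with
  | 0 => 1
  | k.+1 => 'X * Phi a k - ((a k)^*)%:P * revc k (Phi a k)
  end.

Definition Psi (a : nat -> R) (k : nat) : {poly R} := Phi (fun j => - a j) k.

(* paraorthogonal polynomials, built from ({a_j}_{j=0}^{m-2}, b), m >= 1 *)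
Definition Ppoly (m : nat) (a : nat -> R) (b : R) : {poly R} :=
  'X * Phi a m.-1 - (b^*)%:P * revc m.-1 (Phi a m.-1).
Definition Qpoly (m : nat) (a : nat -> R) (b : R) : {poly R} :=
  'X * Psi a m.-1 + (b^*)%:P * revc m.-1 (Psi a m.-1).

Definition Cpoly (m : nat) (a : nat -> R) (b : R) : {poly R} :=
  2%:R^-1 *: (Ppoly m a b + Qpoly m a b).
Definition Spoly (m : nat) (a : nat -> R) (b : R) : {poly R} :=
  2%:R^-1 *: (Ppoly m a b - Qpoly m a b).

Definition Gfun (m : nat) (a : nat -> R) (b : R) (z w : R) : R :=
  - 'i * ((Cpoly m a b).[z] * (w * (Spoly m a b).[w])
          - (Cpoly m a b).[w] * (z * (Spoly m a b).[z])) / (z - w).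

Definition shift (a : nat -> R) : nat -> R := fun j => a j.+1.
End OPUC.

(* Main.v *)
Require Import Defs.
From mathcomp Require Import all_boot all_order all_algebra.
From mathcomp Require Import zify ring.
Import Order.TTheory GRing.Theory Num.Theory.
Local Open Scope ring_scope.
Set Implicit Arguments. Unset Strict Implicit.

Section Aux.
Variable R : numClosedFieldType.

Lemma size_sub_le (p q : {poly R}) k :
  (size p <= k)%N -> (size q <= k)%N -> (size (p - q)%R <= k)%N.
Proof.
move=> hp hq; apply: leq_trans (size_polyD _ _) _.
by rewrite size_polyN geq_max hp hq.
Qed.

Lemma size_Phi (a : nat -> R) k : (size (Phi a k) <= k.+1)%N.
Proof.
elim: k => [|k IH] /=; first by rewrite size_poly1.
apply: size_sub_le.
  apply: leq_trans (size_polyMleq _ _) _; rewrite size_polyX add2n /=; by [].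

apply: leq_trans (size_polyMleq _ _) _.
have := size_polyC_leq1 ((a k)^*); have := size_poly k.+1 (fun i => ((Phi a k)`_(k - i))^*).
rewrite /revc. move=> h1 h2. move: h1 h2. case: (size (_%:P)) => [|[|s]] //= h1 h2; rewrite ?add1n /=; lia.
Qed.

Lemma revc_step (p : {poly R}) (c : R) k : (size p <= k.+1)%N ->
  revc k.+1 ('X * p - (c^*)%:P * revc k p) = revc k p - c%:P * ('X * p).
Proof.
move=> hs; apply/polyP => i.
rewrite /revc coef_poly !coefB !coefCM !coefXM !coef_poly.
case: (ltnP i k.+2) => hi.
  rewrite rmorphB rmorphM /= conjCK.
  have -> : (k.+1 - i == 0)%N = (k < i)%N by lia.
  case: (ltnP k i) => hki.
    have -> : (i < k.+1)%N = false by lia.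
    have -> : (k.+1 - i < k.+1)%N by lia.
    have -> : (k - (k.+1 - i) = i.-1)%N by lia.
    rewrite (negbTE (_ : i != 0%N)) ?rmorph0 ?conjCK //; lia.
  have -> : (i < k.+1)%N by lia.
  have -> : (k.+1 - i).-1 = (k - i)%N by lia.
  case: (eqVneq i 0%N) => [->|hi0].
    by rewrite /= subn0 ltnn rmorph0 mulr0 !subr0.
  have -> : (k.+1 - i < k.+1)%N by lia.
  have -> : (k - (k.+1 - i) = i.-1)%N by lia.
  by rewrite conjCK.
have -> : (i < k.+1)%N = false by lia.
rewrite (negbTE (_ : i != 0%N)); last by lia.
rewrite (leq_sizeP _ _ hs); last by lia.
by rewrite mulr0 subr0.
Qed.

Definition step (c : R) (p : {poly R} * {poly R}) :=
  ('X * p.1 - (c^*)%:P * p.2, p.2 - c%:P * ('X * p.1)).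

Fixpoint Xk (a : nat -> R) (x y : {poly R}) (k : nat) : {poly R} * {poly R} :=
  match k with 0 => (x, y) | k.+1 => step (a k) (Xk a x y k) end.

Lemma Phi_Xk a k : (Phi a k, revc k (Phi a k)) = Xk a 1 1 k.
Proof.
elim: k => [|k IH] /=.
  congr pair; apply/polyP => i; rewrite /revc coef_poly coefC.
  by case: i => [|i] /=; rewrite coef1 ?rmorph1.
rewrite -IH /step /=; congr pair.
by rewrite revc_step ?size_Phi.
Qed.

Lemma Xk_neg a x y k :
  Xk (fun j => - a j) x y k = ((Xk a x (- y) k).1, - (Xk a x (- y) k).2).
Proof.
elim: k => [|k IH] /=; first by rewrite opprK.
rewrite IH /step /= !rmorphN /=; congr pair; rewrite ?polyCN; ring.
Qed.

Lemma Xk_lin a (p q x1 y1 x2 y2 : {poly R}) k :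
  Xk a (p * x1 + q * x2) (p * y1 + q * y2) k =
  (p * (Xk a x1 y1 k).1 + q * (Xk a x2 y2 k).1,
   p * (Xk a x1 y1 k).2 + q * (Xk a x2 y2 k).2).
Proof.
elim: k => [|k IH] //=.
rewrite IH /step /=; congr pair; ring.
Qed.

Lemma Xk_shift a x y k :
  Xk a x y k.+1 = Xk (shift a) (step (a 0%N) (x, y)).1 (step (a 0%N) (x, y)).2 k.
Proof.
elim: k => [|k IH] //=.
by rewrite -IH.
Qed.

Lemma CS_eval (m : nat) a b (z : R) :
  let E := Xk a 1 0 m in let F := Xk a 0 1 m in
  (Cpoly m.+1 a b).[z] = z * E.1.[z] - b^* * E.2.[z] /\
  (Spoly m.+1 a b).[z] = z * F.1.[z] - b^* * F.2.[z].
Proof.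
move=> E F.
have hX := Phi_Xk a m.
have hY := Phi_Xk (fun j => - a j) m.
rewrite Xk_neg in hY.
have e1 : Xk a 1 1 m = Xk a (1 * 1 + 1 * 0) (1 * 0 + 1 * 1) m.
  by rewrite !mulr1 !mulr0 addr0 add0r.
have e2 : Xk a 1 (-1) m = Xk a (1 * 1 + (-1) * 0) (1 * 0 + (-1) * 1) m.
  by rewrite !mulr1 !mulr0 addr0 add0r.
rewrite e1 Xk_lin in hX; rewrite e2 Xk_lin in hY.
case: hX => h1 h2; case: hY => h3 h4.
rewrite -/(Psi a m) in h3 h4.
rewrite /Cpoly /Spoly /Ppoly /Qpoly h2 h4 h1 h3 /E /F !(hornerD, hornerN, hornerZ, hornerM, hornerX, hornerC, hornerCM, hornerMX, mul1r, mulN1r).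
have h2n : (2%:R : R) != 0 by rewrite pnatr_eq0.
by split; field.
Qed.

End Aux.

Theorem lemma5p3 (R : numClosedFieldType) (n : nat) (a : nat -> R) (b : R) :
  (2 <= n)%N -> `|b| = 1 ->
  (forall j : nat, (j <= n - 2)%N -> `|a j| < 1) ->
  forall z w : R, z != w ->
  let rho0 := sqrtC (1 - `|a 0%N| ^+ 2) in
  Gfun n a b z w =
    z * rho0 ^+ 2 * Gfun n.-1 (shift a) b z w
    - 'i * rho0 ^+ 2 * (z * (Spoly n.-1 (shift a) b).[z])
        * (Cpoly n.-1 (shift a) b).[w].
Proof.
move=> hn _ _ z w hzw rho0.
rewrite /rho0 sqrtCK normCK.
case: n hn => [|[|k]] // _.
have eE : Xk a 1 0 k.+1 =
   Xk (shift a) ('X * 1 + (- (a 0%N)%:P * 'X) * 0) ('X * 0 + (- (a 0%N)%:P * 'X) * 1) k.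
  by rewrite Xk_shift /step /=; congr (Xk _ _ _ _); ring.
have eF : Xk a 0 1 k.+1 =
   Xk (shift a) (1 * 0 + (- ((a 0%N)^*)%:P) * 1) (1 * 1 + (- ((a 0%N)^*)%:P) * 0) k.
  by rewrite Xk_shift /step /=; congr (Xk _ _ _ _); ring.
rewrite Xk_lin in eE; rewrite Xk_lin in eF.
have [Cz Sz] := CS_eval k.+1 a b z.
have [Cw Sw] := CS_eval k.+1 a b w.
have [Cz' Sz'] := CS_eval k (shift a) b z.
have [Cw' Sw'] := CS_eval k (shift a) b w.
change (k.+2.-1) with k.+1.
rewrite /Gfun /= Cz Sz Cw Sw Cz' Sz' Cw' Sw' eE eF !(hornerD, hornerN, hornerZ, hornerM, hornerX, hornerC, hornerCM, hornerMX, mul1r, mulN1r, mulr0, mulr1, addr0, add0r).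
have hzw' : z - w != 0 by rewrite subr_eq0.
field; done.
Qed.
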